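(* Let $n\ge 1$, let $x_1,\dots,x_n$ be distinct integers each greater than $1$, and let $D=\{1,0,x_1,\dots,x_n\}$. If $(T,s)$ is an optimal signed tree realizing $D$ and $ab$ is an edge of $T$ with $s(ab)=-$, then $sdeg(a)=sdeg(b)=0$.
   Context: A signed tree is a pair $(T,s)$ where $T$ is a finite tree and $s:E(T)\to\{+,-\}$. The signed degree $sdeg(v)$ of a vertex is the number of incident positive edges minus the number of incident negative edges. $(T,s)$ realizes $D$ if $D=\{sdeg(v):v\in V(T)\}$. $\sigma(D)=\min\{|V(T)|: \text{some signed tree }(T,s)\text{ realizes }D\}$, and a signed tree $(T,s)$ realizing $D$ is optimal if $|V(T)|=\sigma(D)$. *)

(* Defs.v *)
From mathcomp Require Import all_boot all_order all_algebra.
Set Implicit Arguments. Unset Strict Implicit. Unset Printing Implicit Defensive.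
Import Order.TTheory GRing.Theory Num.Theory.

(* A sign function is a
   relation s : rel 'I_k, where s u v = true means the edge uv is positive
   (+) and s u v = false means negative (-); it is required symmetric so that
   it is a function of the unordered edge.  Its values on non-edges are irrelevant. *)

Definition simple_graph (k : nat) (e : rel 'I_k) : Prop :=
  symmetric e /\ irreflexive e.

Definition is_tree (k : nat) (e : rel 'I_k) : Prop :=
  [/\ simple_graph e, 0 < k,
      (forall x y : 'I_k, connect e x y)
    & (forall c : seq 'I_k, ucycle e c -> size c < 3)].

Definition signed_tree (k : nat) (e s : rel 'I_k) : Prop :=
  is_tree e /\ symmetric s.

Definition sdeg (k : nat) (e s : rel 'I_k) (v : 'I_k) : int :=
  (#|[set y | e v y && s v y]|)%:Z - (#|[set y | e v y && ~~ s v y]|)%:Z.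

Definition realizes (k : nat) (e s : rel 'I_k) (D : seq int) : Prop :=
  forall d : int, (d \in D) = [exists v : 'I_k, sdeg e s v == d].

Definition optimal (k : nat) (e s : rel 'I_k) (D : seq int) : Prop :=
  [/\ signed_tree e s, realizes e s D &
      forall (k' : nat) (e' s' : rel 'I_k'),
        signed_tree e' s' -> realizes e' s' D -> k <= k'].

(* Main.v *)
Require Import Defs.
From mathcomp Require Import all_boot all_order all_algebra.
Import Order.TTheory GRing.Theory Num.Theory.
From mathcomp Require Import zify.
Set Implicit Arguments. Unset Strict Implicit. Unset Printing Implicit Defensive.

Section Hand.
Variables (T : finType) (e : rel T).
Hypotheses (esym : symmetric e) (eirr : irreflexive e)
  (eacyc : forall c : seq T, ucycle e c -> size c < 3).

Definition dg (A : {set T}) v := \sum_(y in A) (e v y : nat).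

Lemma sum_eq1_le (A : {set T}) h : \sum_(y in A) (y == h : nat) <= 1.
Proof.
apply: (@leq_trans (\sum_y (y == h : nat))).
  by rewrite [X in _ <= X](bigID (mem A)) /= leq_addr.
by rewrite -big_mkcond /= big_pred1_eq.
Qed.

Lemma leaf_exists (A : {set T}) : A != set0 -> exists2 v, v \in A & dg A v <= 1.
Proof.
move=> An0.
case: (boolP [exists v in A, dg A v <= 1]) => [/exists_inP[v vA h]|/exists_inPn H].
  by exists v.
exfalso; case/set0Pn: An0 => x0 x0A.
suff: forall N x p, #|A| - size p <= N -> x \in A -> all (mem A) p ->
   uniq (x :: p) -> path e x p -> False.
  by move/(_ #|A| x0 [::]); apply => //; rewrite subn0.
elim=> [|N IH] x p hN xA pA u pth.
  have : size (x :: p) <= #|A|.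
    rewrite -(card_uniqP u); apply: subset_leq_card; apply/subsetP => y.
    by rewrite inE => /orP[/eqP->//|]; move/allP: pA => pA /pA.
  move=> /= ; lia.
have sz : size (x :: p) <= #|A|.
  rewrite -(card_uniqP u); apply: subset_leq_card; apply/subsetP => y.
  by rewrite inE => /orP[/eqP->//|]; move/allP: pA => pA /pA.
set h := head x p.
have [y [yA exy yh]] : exists y, [/\ y \in A, e x y & y != h].
  case: (boolP [exists y, [&& y \in A, e x y & y != h]]).
    by case/existsP => y /and3P[? ? ?]; exists y.
  rewrite negb_exists => /forallP Hn; exfalso.
  have := H x xA; move/negP; apply.
  apply: leq_trans (sum_eq1_le A h); apply: leq_sum => y yA.
  have := Hn y; rewrite yA /=; case: (e x y) => //=; rewrite negbK => ->//.
case yin: (y \in x :: p); last first.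
  apply: (IH y (x :: p)) => //=.
  - lia.
  - by rewrite xA.
  - by rewrite yin.
  - by rewrite esym exy.
have yp : y \in p.
  move: yin; rewrite inE => /orP[/eqP yx|//].
  by move: exy; rewrite -yx eirr.
move: yh; rewrite /h => yh; clear h.
case/path.splitPr: p / yp yh u pth pA {yin sz hN} => p1 p2 yh u pth pA.
rewrite -cat_rcons in yh u pth pA.
case: p1 yh u pth pA => [|z p1] yh u pth pA.
  by move: yh; rewrite /= eqxx.
have uc : ucycle e (x :: rcons (z :: p1) y); last first.
  by have := eacyc uc; rewrite /= size_rcons.
apply/andP; split.
  rewrite /cycle rcons_path last_rcons -esym exy andbT.
  by move: pth; rewrite cat_path => /andP[].
by move: u; rewrite -cat_cons cat_uniq => /andP[].
Qed.

Lemma dg_split (A : {set T}) v u : v \in A -> dg A u = e u v + dg (A :\ v) u.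
Proof.
move=> vA; rewrite /dg (bigD1 v) //=; congr (_ + _).
by apply: eq_bigl => y; rewrite in_setD1 andbC.
Qed.

Lemma hand (A : {set T}) : A != set0 -> \sum_(v in A) dg A v + 2 <= 2 * #|A|.
Proof.
have [m] := ubnP #|A|; elim: m A => [//|m IH] A hm An0.
have [v vA vl] := leaf_exists An0.
set B := A :\ v.
have cA : #|A| = #|B|.+1 by rewrite (cardsD1 v A) vA.
have dv : dg A v = dg B v by rewrite (dg_split v vA) eirr.
have sA : \sum_(u in A) dg A u = dg A v + \sum_(u in B) dg A u.
  by rewrite (bigD1 v) //=; congr (_ + _); apply: eq_bigl => y; rewrite in_setD1 andbC.
have sB : \sum_(u in B) dg A u = dg A v + \sum_(u in B) dg B u.
  rewrite (eq_bigr (fun u => e u v + dg B u)); last by move=> u _; rewrite (dg_split u vA).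
  rewrite big_split /=; congr (_ + _).
  by rewrite dv /dg; apply: eq_bigr => u _; rewrite esym.
rewrite sA sB.
case: (boolP (B == set0)) => [/eqP B0|Bn0].
  rewrite dv B0 /dg !big_set0 cA B0 cards0; lia.
have := IH B; rewrite cA in hm; move/(_ hm Bn0) => hB.
rewrite cA; lia.
Qed.

End Hand.

Section ParTree.
Variables (K : nat) (par : nat -> nat).
Hypothesis hpar : forall v, 0 < v < K -> par v < v.

Definition padj (u v : nat) := ((0 < u) && (par u == v)) || ((0 < v) && (par v == u)).
Definition pe : rel 'I_K := fun u v => padj u v.

Lemma pe_sym : symmetric pe.
Proof. by move=> u v; rewrite /pe /padj orbC. Qed.

Lemma pe_irr : irreflexive pe.
Proof.
move=> u; rewrite /pe /padj orbb; apply/negP => /andP[u0 /eqP pu].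
by have := hpar (v := u); rewrite u0 ltn_ord pu ltnn; move/(_ isT).
Qed.

Lemma pe_conn0 (r : 'I_K) : val r = 0 -> forall v : 'I_K, connect pe v r.
Proof.
move=> r0; suff H: forall m (v : 'I_K), v < m -> connect pe v r.
  by move=> v; apply: (H v.+1).
elim=> [//|m IH] v vm.
case v0: (val v == 0).
  by have -> : v = r by apply: val_inj; rewrite r0; apply/eqP.
have pv : par v < v by apply: hpar; rewrite ltn_ord andbT lt0n v0.
pose w := Ordinal (ltn_trans pv (ltn_ord v)).
have evw : pe v w by rewrite /pe /padj lt0n v0 /= eqxx.
have wm : w < m by rewrite /=; lia.
exact: connect_trans (connect1 evw) (IH w wm).
Qed.

Lemma pe_conn (v u : 'I_K) : connect pe v u.
Proof.
have K0 : 0 < K by apply: leq_ltn_trans (ltn_ord v).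
pose r := Ordinal K0.
apply: connect_trans (pe_conn0 (r := r) erefl v) _.
rewrite (sym_connect_sym pe_sym); exact: pe_conn0.
Qed.

Lemma seq_max (c : seq 'I_K) (x0 : 'I_K) :
  exists2 m, m \in x0 :: c & forall y, y \in x0 :: c -> (y : nat) <= m.
Proof.
elim: c x0 => [|y c IH] x0.
  by exists x0 => [|y]; rewrite ?inE // => /eqP->.
have [m mi mx] := IH y.
case: (leqP (x0 : nat) m) => h.
  exists m; first by rewrite inE mi orbT.
  by move=> z; rewrite inE => /orP[/eqP->//|]; apply: mx.
exists x0; first by rewrite inE eqxx.
move=> z; rewrite inE => /orP[/eqP->//|/mx hz]; exact: leq_trans hz (ltnW h).
Qed.

Lemma pe_acyc (c : seq 'I_K) : ucycle pe c -> size c < 3.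
Proof.
rewrite ltnNge; move=> uc; apply/negP => c3.
case: c uc c3 => [//|x0 c] uc c3.
have [m mi mx] := seq_max c x0.
have := rot_index mi; set c' := rot _ _ => hc'.
have uc' : ucycle pe c' by rewrite rot_ucycle.
have mx' : forall y, y \in c' -> (y : nat) <= m by move=> y; rewrite mem_rot; apply: mx.
have sz : size c' = size (x0 :: c) by rewrite size_rot.
move: uc' mx' sz; rewrite hc'; set p := _ ++ _ => uc' mx' sz.
case: p uc' mx' sz => [|w1 [|w2 p]] uc' mx' sz; rewrite -sz in c3 => //.
move/andP: uc' => [cy un].
move: cy; rewrite /cycle rcons_path => /andP[].
rewrite /= => /andP[e1 _] e2.
have hm : forall w, w \in [:: m, w1, w2 & p] -> pe m w -> (w : nat) = par m.
  move=> w wi; rewrite /pe /padj => /orP[/andP[_ /eqP]//|/andP[w0 /eqP pw]].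
  have := hpar (v := w); rewrite w0 ltn_ord pw => /(_ isT) h.
  by have := mx' w wi; lia.
have w1i : w1 \in [:: m, w1, w2 & p] by rewrite !inE eqxx orbT.
have h1 := hm w1 w1i e1.
have h2 : ((last w2 p) : nat) = par m.
  apply: hm; last by rewrite pe_sym.
  by rewrite (in_cons m) (in_cons w1) mem_last !orbT.
have : w1 = last w2 p by apply: val_inj; rewrite /= h1 h2.
move=> eqw; move: un; rewrite /= eqw mem_last.
by rewrite !andbF.
Qed.

End ParTree.

Lemma card_ord_count K (Q : pred nat) : #|[set y : 'I_K | Q y]| = count Q (iota 0 K).
Proof.
rewrite -sum1dep_card -(big_mkord (fun y => Q y) (fun _ => 1)).
by rewrite /index_iota subn0 sum1_count.
Qed.

Lemma count_split (T : Type) (a b : pred T) s :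
  count a s = count (fun y => a y && b y) s + count (fun y => a y && ~~ b y) s.
Proof. by elim: s => //= y s ->; case: (a y); case: (b y) => /=; lia. Qed.

Lemma count_disj (T : eqType) (a b : pred T) s :
  {in s, forall y, ~~ (a y && b y)} ->
  count (fun y => a y || b y) s = count a s + count b s.
Proof.
move=> H; rewrite -(count_predUI a b) (@eq_in_count _ (predI a b) pred0).
  by rewrite count_pred0 addn0.
by move=> y /H /negbTE.
Qed.

Lemma count_iota1 K c : count (fun y => c == y) (iota 0 K) = (c < K).
Proof.
rewrite (eq_count (a2 := pred1 c)); last by move=> y; rewrite /= eq_sym.
by rewrite count_uniq_mem ?iota_uniq // mem_iota.
Qed.

Lemma count_nth_pos (s : seq nat) (Q : pred nat) :
  count (fun y => (0 < y) && Q (nth 0 (0 :: s) y)) (iota 0 (size s).+1) = count Q s.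
Proof.
have -> : iota 0 (size s).+1 = 0 :: map (addn 1) (iota 0 (size s)) by rewrite -iotaDl.
rewrite /= count_map add0n.
rewrite -[in RHS](mkseq_nth 0 s) /mkseq count_map; apply: eq_count => y /=.
by [].
Qed.

Section Constr.
Variables (n : nat) (Xo : 'I_n -> nat).

Definition Tl := flatten [seq nseq (Xo i - 2) (i + 3) | i <- enum 'I_n].
Definition Tr := iota 0 (n + 3) ++ Tl.
Definition Tp := 0 :: Tr.
Definition KK := size Tp.
Definition cpar w := nth 0 Tp w.

Lemma mem_Tl y : y \in Tl -> 3 <= y < n + 3.
Proof.
case/flatten_mapP => i _; rewrite mem_nseq => /andP[_ /eqP->].
have := ltn_ord i; lia.
Qed.

Lemma KK_ge : n + 4 <= KK.
Proof. by rewrite /KK /Tp /Tr /= size_cat size_iota; lia. Qed.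

Lemma cpar_lt v : 0 < v < KK -> cpar v < v.
Proof.
move=> /andP[v0 vK]; rewrite /cpar /Tp.
case: v v0 vK => [//|v] _ vK /=.
rewrite /Tr nth_cat size_iota.
case: (ltnP v (n + 3)) => h; first by rewrite nth_iota.
have : nth 0 Tl (v - (n + 3)) \in Tl.
  apply: mem_nth; move: vK; rewrite /KK /Tp /Tr /= size_cat size_iota; lia.
move/mem_Tl; lia.
Qed.

Definition sp (u v : nat) := ((u == 1) && (v == 2)) || ((u == 2) && (v == 1)).
Definition ce : rel 'I_KK := pe cpar.
Definition cs : rel 'I_KK := fun u v => ~~ sp u v.

Definition cdeg v := count (padj cpar v) (iota 0 KK).
Definition cneg v := count (fun y => padj cpar v y && sp v y) (iota 0 KK).

Lemma csdeg (v : 'I_KK) : sdeg ce cs v = ((cdeg v)%:Z - 2%:Z * (cneg v)%:Z)%R.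
Proof.
rewrite /sdeg.
have -> : #|[set y | ce v y && cs v y]| = count (fun y => padj cpar v y && ~~ sp v y) (iota 0 KK).
  by rewrite -card_ord_count.
have -> : #|[set y | ce v y && ~~ cs v y]| = cneg v.
  rewrite /cneg -card_ord_count; apply: eq_card => y; rewrite !inE /cs negbK //.
rewrite /cdeg (count_split (padj cpar v) (sp v)) /cneg.
lia.
Qed.

Hypothesis Xo2 : forall i, 2 <= Xo i.

Lemma KK_eq : KK = (size Tr).+1.
Proof. by []. Qed.

Lemma cpar_small v : 0 < v <= n + 3 -> cpar v = v.-1.
Proof.
case: v => [//|v] /= h; rewrite /cpar /Tp /= /Tr nth_cat size_iota.
have -> : v < n + 3 by lia.
by rewrite nth_iota //; lia.
Qed.

Lemma countTl_out v : ~~ (3 <= v < n + 3) -> count (fun x : nat => x == (v : nat)) Tl = 0.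
Proof.
move=> h; rewrite (@eq_in_count _ _ pred0) ?count_pred0 //.
move=> y /mem_Tl yT /=; apply/negP => /eqP yv; move: h; rewrite -yv yT //.
Qed.

Lemma countTl_j (j : 'I_n) : count (fun x => x == j + 3) Tl = Xo j - 2.
Proof.
rewrite /Tl count_flatten -map_comp sumnE big_map big_enum /= (bigD1 j) //=.
rewrite big1 ?addn0; first by rewrite count_nseq eqxx mul1n.
move=> i ij; rewrite count_nseq /=.
have -> : (i + 3 == j + 3) = false by rewrite eqn_add2r; apply/negbTE.
by rewrite mul0n.
Qed.

Lemma cdeg_val (v : 'I_KK) : cdeg v = (0 < v) + (v < n + 3) + count (fun x : nat => x == (v : nat)) Tl.
Proof.
rewrite /cdeg /padj count_disj; last first.
  move=> y; rewrite mem_iota add0n => /andP[_ yK]; apply/negP.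
  move=> /andP[/andP[v0 /eqP pv] /andP[y0 /eqP py]].
  have h1 := cpar_lt (v := v); have h2 := cpar_lt (v := y).
  rewrite v0 y0 ltn_ord yK /= in h1 h2.
  have := h1 isT; have := h2 isT; lia.
rewrite -addnA; congr (_ + _).
  case v0: (0 < (v : nat)).
    rewrite (@eq_count _ _ (fun y => cpar v == y)); last by [].
    rewrite count_iota1; have := cpar_lt (v := v); rewrite v0 ltn_ord => /(_ isT).
    by have := ltn_ord v; lia.
  by rewrite (@eq_count _ _ pred0) ?count_pred0.
have H := count_nth_pos Tr (fun x => x == (v : nat)).
rewrite -[iota 0 KK]/(iota 0 (size Tr).+1) [LHS]H /Tr count_cat; congr (_ + _).
by rewrite (@eq_count _ _ (fun x => (v : nat) == x)) ?count_iota1 // => x /=; rewrite eq_sym.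
Qed.

Lemma cneg_out (v : 'I_KK) : (v : nat) != 1 -> (v : nat) != 2 -> cneg v = 0.
Proof.
move=> v1 v2; rewrite /cneg (@eq_count _ _ pred0) ?count_pred0 //.
by move=> y /=; rewrite /sp (negbTE v1) (negbTE v2) /= andbF.
Qed.

Lemma cneg_12 (v : 'I_KK) : ((v : nat) == 1) || ((v : nat) == 2) -> cneg v = 1.
Proof.
have K4 := KK_ge.
have c2 : cpar 2 = 1 by rewrite cpar_small //; lia.
have c1 : cpar 1 = 0 by rewrite cpar_small //; lia.
case/orP => /eqP vv; rewrite /cneg /sp vv.
  rewrite (@eq_count _ _ (fun y => 2 == y)) ?count_iota1; first lia.
  move=> y /=; case: (eqVneq y 2) => [->|yn]; first by rewrite /padj c2 eqxx /= orbT.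
  by rewrite andbF.
rewrite (@eq_count _ _ (fun y => 1 == y)) ?count_iota1; first lia.
move=> y /=; case: (eqVneq y 1) => [->|yn]; first by rewrite /padj c2 eqxx.
by rewrite andbF.
Qed.

Lemma sdeg_0 (v : 'I_KK) : (v : nat) = 0 -> sdeg ce cs v = 1%R.
Proof.
move=> v0; rewrite csdeg (cneg_out (v := v)); try by rewrite v0.
rewrite cdeg_val v0 countTl_out // addn3 /=; lia.
Qed.

Lemma sdeg_12 (v : 'I_KK) : ((v : nat) == 1) || ((v : nat) == 2) -> sdeg ce cs v = 0%R.
Proof.
move=> h; rewrite csdeg cneg_12 // cdeg_val countTl_out; last first.
  by case/orP: h => /eqP->.
by case/orP: h => /eqP->; rewrite addn3 /=; lia.
Qed.

Lemma sdeg_hub (v : 'I_KK) (j : 'I_n) : (v : nat) = j + 3 -> sdeg ce cs v = Posz (Xo j).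
Proof.
move=> vj; rewrite csdeg (cneg_out (v := v)); try by rewrite vj addn3.
rewrite cdeg_val vj countTl_j.
have := ltn_ord j; have := Xo2 j; move=> h1 h2.
have -> : (0 < j + 3) = true by lia.
have -> : (j + 3 < n + 3) = true by lia.
lia.
Qed.

Lemma sdeg_big (v : 'I_KK) : n + 3 <= v -> sdeg ce cs v = 1%R.
Proof.
move=> h; rewrite csdeg (cneg_out (v := v)); try by apply/eqP; lia.
rewrite cdeg_val countTl_out; last by apply/negP; lia.
have -> : (0 < (v : nat)) = true by lia.
have -> : ((v : nat) < n + 3) = false by lia.
by [].
Qed.

End Constr.

Lemma KK_val n (Xo : 'I_n -> nat) : KK Xo = n + 4 + \sum_(i < n) (Xo i - 2).
Proof.
rewrite /KK /Tp /Tr /= size_cat size_iota /Tl size_flatten /shape -map_comp sumnE big_map big_enum /=.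
under eq_bigr do rewrite size_nseq.
rewrite addnS -addSn; congr (_ + _); lia.
Qed.

Lemma c_tree n (Xo : 'I_n -> nat) : signed_tree (ce (Xo:=Xo)) (cs (Xo:=Xo)).
Proof.
have hp := fun v => @cpar_lt n Xo v.
split; last first.
  move=> u v; rewrite /cs /sp.
  by case: (_ == 1); case: (_ == 2); case: (_ == 1); case: (_ == 2).
split.
- rewrite /ce; split; [exact: pe_sym | exact: (pe_irr hp)].
- by have := KK_ge Xo; lia.
- move=> u v; rewrite /ce; exact: (pe_conn hp).
- move=> c; rewrite /ce; exact: (pe_acyc hp).
Qed.

Lemma c_real n (x : 'I_n -> int) (xgt1 : forall i, (1 < x i)%R) :
  realizes (ce (Xo:=fun i => `|x i|%N)) (cs (Xo:=fun i => `|x i|%N))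
           (1%R :: 0%R :: [seq x i | i <- enum 'I_n]).
Proof.
set Xo := fun i => `|x i|%N.
have Xo2 : forall i, 2 <= Xo i by move=> i; have := xgt1 i; rewrite /Xo; lia.
have XoE : forall i, Posz (Xo i) = x i by move=> i; have := xgt1 i; rewrite /Xo; lia.
have K4 := KK_ge Xo.
move=> d; apply/idP/idP.
  rewrite !inE => /orP[/eqP->|/orP[/eqP->|/mapP[i _ ->]]]; apply/existsP.
  - have h : 0 < KK Xo by lia.
    by exists (Ordinal h); apply/eqP; apply: sdeg_0.
  - have h : 1 < KK Xo by lia.
    by exists (Ordinal h); apply/eqP; apply: sdeg_12.
  - have h : i + 3 < KK Xo by have := ltn_ord i; lia.
    by exists (Ordinal h); apply/eqP; rewrite (sdeg_hub Xo2 (j := i)) // XoE.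
case/existsP => v /eqP <-.
case: (ltnP (v : nat) 3) => h3.
  case v0: ((v : nat) == 0).
    by rewrite sdeg_0 ?inE ?eqxx //; apply/eqP.
  by rewrite sdeg_12 ?inE ?eqxx ?orbT //; move: v0 h3; case: (v : nat) => [|[|[|]]].
case: (ltnP (v : nat) (n + 3)) => hn3.
  have hj : (v : nat) - 3 < n by lia.
  rewrite (sdeg_hub Xo2 (j := Ordinal hj)); last by rewrite /=; lia.
  by rewrite XoE !inE; apply/orP; right; apply/orP; right; apply: map_f; rewrite mem_enum.
by rewrite sdeg_big ?inE ?eqxx.
Qed.

Lemma card_sumb (T : finType) (P : pred T) : #|[set y | P y]| = \sum_y (P y : nat).
Proof.
rewrite -sum1dep_card big_mkcond /=; apply: eq_bigr => y _; by case: (P y).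
Qed.

Lemma nbr_of_conn (T : finType) (e : rel T) v w : connect e v w -> v != w -> exists y, e v y.
Proof.
case/connectP => p; case: p => [/= _ ->|y p /= /andP[evy _] _]; first by rewrite eqxx.
by exists y.
Qed.

Lemma sum_sub (T : finType) (S : {set T}) (F : T -> nat) : \sum_(v in S) F v <= \sum_v F v.
Proof. by rewrite [X in _ <= X](bigID (mem S)) /= leq_addr. Qed.

Lemma lower (n : nat) (hn : 1 <= n) (x : 'I_n -> int)
    (xinj : injective x) (xgt1 : forall i, (1 < x i)%R)
    (k : nat) (e s : rel 'I_k) :
  signed_tree e s -> realizes e s (1%R :: 0%R :: [seq x i | i <- enum 'I_n]) ->
  forall a b : 'I_k, e a b -> ~~ s a b -> sdeg e s a != 0%R ->
  \sum_(i < n) (`|x i|%N - 1) + 5 <= k.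
Proof.
move=> [[[esym eirr] k0 econn eacyc] ssym] hreal a b eab nsab sa0.
set D := (1%R :: 0%R :: [seq x i | i <- enum 'I_n]) in hreal.
pose p v := #|[set y | e v y && s v y]|.
pose q v := #|[set y | e v y && ~~ s v y]|.
pose d v := dg e [set: 'I_k] v.
have sdE : forall v, sdeg e s v = ((p v)%:Z - (q v)%:Z)%R by [].
have dE : forall v, d v = p v + q v.
  move=> v; rewrite /d /dg /p /q !card_sumb -big_split /=.
  rewrite (eq_bigl predT) //; last by move=> y; rewrite in_setT.
  by apply: eq_bigr => y _; case: (e v y); case: (s v y).
have inD : forall v, sdeg e s v \in D.
  by move=> v; rewrite hreal; apply/existsP; exists v.
have xD : forall i, x i \in D.
  by move=> i; rewrite !inE; apply/orP; right; apply/orP; right; apply: map_f; rewrite mem_enum.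
have sdpos : forall v, (0 <= sdeg e s v)%R.
  move=> v; move: (inD v); rewrite !inE => /orP[/eqP->//|/orP[/eqP->//|/mapP[i _ ->]]].
  by have := xgt1 i; lia.
have [z zE] : exists z, sdeg e s z = 0%R.
  have : (0%R : int) \in D by rewrite !inE eqxx orbT.
  by rewrite hreal => /existsP[z /eqP]; exists z.
pose u i := odflt a [pick v | sdeg e s v == x i].
have uE : forall i, sdeg e s (u i) = x i.
  move=> i; rewrite /u; case: pickP => [v /eqP //|H].
  by have := xD i; rewrite hreal => /existsP[v hv]; have := H v; rewrite hv.
have uinj : injective u by move=> i j h; apply: xinj; rewrite -uE h uE.
pose i0 : 'I_n := Ordinal hn.
have zu : forall i, z != u i.
  by move=> i; apply/eqP => h; have := uE i; rewrite -h zE; have := xgt1 i; lia.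
have nbr : forall v, exists y, e v y.
  move=> v; case: (eqVneq v z) => [->|vz].
    by apply: (nbr_of_conn (w := u i0)) => //; apply: zu.
  exact: (nbr_of_conn (w := z)).
have d1 : forall v, 1 <= d v.
  move=> v; have [y ey] := nbr v; rewrite /d /dg (bigD1 y) ?in_setT //= ey; lia.
pose M v := if sdeg e s v == 0%R then 1 else `|sdeg e s v|%N - 1.
pose N v := if sdeg e s v == 0%R then 0 else 2 * q v.
have dL : forall v, 1 + M v + N v <= d v.
  move=> v; have := d1 v; rewrite dE /M /N; have := sdpos v; rewrite sdE.
  case: eqP => [h|h]; lia.
have hs := hand esym eirr eacyc (A := [set: 'I_k]).
have : [set: 'I_k] != set0.
  by apply/set0Pn; exists a; rewrite in_setT.
move/hs; rewrite cardsT card_ord => hs2.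
have S1 : \sum_v (1 + M v + N v) <= \sum_(v in [set: 'I_k]) d v.
  have -> : \sum_(v in [set: 'I_k]) d v = \sum_v d v by apply: eq_bigl => y; rewrite in_setT.
  by apply: leq_sum => v _; apply: dL.
rewrite !big_split /= sum_nat_const card_ord muln1 in S1.
have SN : 2 <= \sum_v N v.
  rewrite (bigD1 a) //=; apply: leq_trans (leq_addr _ _).
  rewrite /N (negbTE sa0).
  have : 0 < q a.
    rewrite /q card_gt0; apply/set0Pn; exists b; rewrite inE eab nsab.
    by [].
  lia.
have SM : \sum_(i < n) (`|x i|%N - 1) + 1 <= \sum_v M v.
  apply: leq_trans (sum_sub (z |: [set u i | i in 'I_n]) M).
  rewrite big_setU1 /=; last first.
    by apply/imsetP => -[i _ zi]; move: (zu i); rewrite zi eqxx.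
  rewrite big_imset /=; last by move=> i j _ _; apply: uinj.
  rewrite /M zE eqxx addnC leq_add2l.
  apply: leq_sum => i _; rewrite uE.
  have := xgt1 i; case: eqP => [->|_] //.
have hs3 : \sum_(v in [set: 'I_k]) d v + 2 <= 2 * k := hs2.
have S2 : k + \sum_v M v + \sum_v N v <= \sum_(v in [set: 'I_k]) d v := S1.
lia.
Qed.

Unset Implicit Arguments.

Theorem mainTheorem9 (n : nat) (hn : 1 <= n) (x : 'I_n -> int)
    (xinj : injective x) (xgt1 : forall i, (1 < x i)%R)
    (k : nat) (e s : rel 'I_k) :
  optimal e s (1%R :: 0%R :: [seq x i | i <- enum 'I_n]) ->
  forall a b : 'I_k, e a b -> ~~ s a b ->
    sdeg e s a = 0%R /\ sdeg e s b = 0%R.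
Proof.
move=> [ht hr hopt].
have key : forall a b, e a b -> ~~ s a b -> sdeg e s a = 0%R.
  move=> a b eab nsab; apply/eqP; apply/negPn/negP => sa0.
  have L := lower hn xinj xgt1 ht hr eab nsab sa0.
  have := hopt _ _ _ (c_tree (fun i => `|x i|%N)) (c_real xgt1).
  rewrite KK_val.
  have : \sum_(i < n) (`|x i|%N - 1) = \sum_(i < n) (`|x i|%N - 2) + \sum_(i < n) 1.
    rewrite -big_split; apply: eq_bigr => i _ /=; have := xgt1 i; lia.
  rewrite sum1_card card_ord.
  lia.
case: ht => [[[esym _] _ _ _] ssym].
move=> a b eab nsab; split; first exact: key eab nsab.
by apply: (key b a); [rewrite esym | rewrite ssym].
Qed.
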